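(* Let $N\ge1$ be an integer, $d>0$, $T\ge (N+1)d$, and $0\le s_1\le\dots\le s_N$. Let $\bar x_1,\dots,\bar x_{N+1}$ be the output of the Inter-Update Balancing Algorithm defined in the context. Then the sequence $\{\bar x_i\}_{i=1}^N$ is non-increasing. Moreover, $\bar x_j>\bar x_{j+1}$ holds only if $\sum_{i=1}^j\bar x_i=s_j+jd$.
   Context: Inter-Update Balancing Algorithm. Set $s_0:=0$, $s_{N+1}:=T-d$, and $i_0:=0$. For $k=0,1,2,\dots$, while $i_k<N+1$, do the following. 1. Compute $M_k=\max_{i_k<j\le N+1}\frac{s_j-s_{i_k}}{j-i_k}$. 2. Let $i_{k+1}$ be the largest index $j\in\{i_k+1,\dots,N+1\}$ attaining this maximum. 3. Set $\bar x_i=M_k+d$ for all $i_k<i\le i_{k+1}$. The algorithm stops once $i_{k+1}=N+1$. For example, the first step computes the maximum of $\{s_1,s_2/2,\dots,s_N/N,(T-d)/(N+1)\}$. *)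

(* Defs.v *)
From HB Require Import structures.
From mathcomp Require Import all_boot all_order all_algebra.
Set Implicit Arguments. Unset Strict Implicit. Unset Printing Implicit Defensive.
Import Order.TTheory GRing.Theory Num.Theory.
Local Open Scope ring_scope.

Section IUB.
Variables (R : realFieldType) (N : nat) (d T : R) (s : nat -> R).

Definition sext (j : nat) : R :=
  if j == 0%N then 0 else if j == N.+1 then T - d else s j.

Definition slope (a j : nat) : R := (sext j - sext a) / (j - a)%:R.

Definition Mmax (a : nat) : R :=
  \big[Num.max/slope a a.+1]_(a.+1 <= j < N.+2) slope a j.

(* next breakpoint: largest j in {a+1,...,N+1} attaining the maximum;
   once a >= N+1 the algorithm has stopped and we stay put. *)
Definition next_bp (a : nat) : nat :=
  if (a < N.+1)%N then (\max_(a.+1 <= j < N.+2 | slope a j == Mmax a) j)%N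
  else a.

Definition bp (k : nat) : nat := iter k next_bp 0%N.

(* the breakpoint i_k with i_k < i <= i_{k+1} (for 1 <= i <= N+1) *)
Definition block_start (i : nat) : nat :=
  (\max_(k < N.+2 | (bp k < i)%N) bp k)%N.

Definition xbar (i : nat) : R := Mmax (block_start i) + d.

End IUB.

(* Main.v *)
Require Import Defs.
From HB Require Import structures.
From mathcomp Require Import all_boot all_order all_algebra.
From mathcomp Require Import lra zify.
Import Order.TTheory GRing.Theory Num.Theory.
Local Open Scope ring_scope.
Set Implicit Arguments. Unset Strict Implicit.

Section Aux.
Variable R : realFieldType.

Lemma gmax_seq (F : nat -> R) x0 (r : seq nat) :
  x0 <= \big[Num.max/x0]_(j <- r) F j /\
  (forall j, j \in r -> F j <= \big[Num.max/x0]_(j <- r) F j) /\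
  (\big[Num.max/x0]_(j <- r) F j = x0 \/
   exists j, j \in r /\ F j = \big[Num.max/x0]_(j <- r) F j).
Proof.
elim: r => [|a r [IH1 [IH2 IH3]]].
  by rewrite big_nil; split=> //; split; [move=> j | left].
rewrite big_cons /=.
set m := \big[_/_]_(_ <- _) _ in IH1 IH2 IH3 *.
have [Hle|Hlt] := leP (F a) m.
- split => //; split.
    by move=> j; rewrite in_cons => /orP [/eqP ->|/IH2].
  case: IH3 => [->|[j [Hj Hjm]]]; [by left | right; exists j; by rewrite in_cons Hj orbT].
- split; first exact: le_trans IH1 (ltW Hlt).
  split.
    move=> j; rewrite in_cons => /orP [/eqP ->//|/IH2 H]; exact: le_trans H (ltW Hlt).
  by right; exists a; rewrite in_cons eqxx.
Qed.

Lemma gmax (F : nat -> R) x0 lo hi :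
  x0 <= \big[Num.max/x0]_(lo <= j < hi) F j /\
  (forall j, (lo <= j < hi)%N -> F j <= \big[Num.max/x0]_(lo <= j < hi) F j) /\
  (\big[Num.max/x0]_(lo <= j < hi) F j = x0 \/
   exists j, (lo <= j < hi)%N /\ F j = \big[Num.max/x0]_(lo <= j < hi) F j).
Proof.
have [H1 [H2 H3]] := gmax_seq F x0 (index_iota lo hi).
split => //; split.
  by move=> j Hj; apply: H2; rewrite mem_index_iota.
case: H3 => [->|[j [Hj Hjm]]]; [by left | right; exists j; by rewrite -mem_index_iota].
Qed.

Lemma gmaxn (P : pred nat) lo n :
  (exists j, (lo <= j < lo + n)%N /\ P j) ->
  let b := (\max_(lo <= j < lo + n | P j) j)%N in
  (lo <= b < lo + n)%N /\ P b /\ (forall j, (lo <= j < lo + n)%N -> P j -> (j <= b)%N).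
Proof.
elim: n => [|n IH] Hex /=.
  case: Hex => j [Hj _]; lia.
rewrite addnS big_mkcond big_nat_recr /=; last by lia.
rewrite -big_mkcond.
case: (boolP (P (lo + n)%N)) => Hp.
- case: (boolP [exists j : 'I_(lo + n), (lo <= j)%N && P j]) => He.
  + have Hex' : exists j, (lo <= j < lo + n)%N /\ P j.
      case/existsP: He => j /andP [H1 H2]; exists j; split=> //; by rewrite H1 ltn_ord.
    have [H1 [H2 H3]] := IH Hex'.
    set b := (\max_(_ <= _ < _ | _) _)%N in H1 H2 H3 *.
    have -> : maxn b (lo + n) = (lo + n)%N by lia.
    split; first lia. split => // j Hj _; lia.
  + have Hb : (\max_(lo <= j < lo + n | P j) j)%N = 0%N.
      apply/eqP; rewrite -leqn0; apply/bigmax_leqP_seq => j; rewrite mem_iota => Hj Pj.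
      exfalso; move/negP: He; apply; apply/existsP.
      have Hj' : (j < lo + n)%N by lia.
      by exists (Ordinal Hj'); rewrite /= Pj andbT; lia.
    rewrite Hb max0n; split; first lia. split => // j Hj _; lia.
- rewrite maxn0.
  have Hex' : exists j, (lo <= j < lo + n)%N /\ P j.
    case: Hex => j [Hj Pj]; exists j; split => //.
    have : j != (lo + n)%N by apply/eqP => E; rewrite -E Pj in Hp.
    lia.
  have [H1 [H2 H3]] := IH Hex'.
  set b := (\max_(_ <= _ < _ | _) _)%N in H1 H2 H3 *.
  split; first lia. split => // j Hj Pj.
  apply: H3 => //. have : j != (lo + n)%N by apply/eqP => E; rewrite -E Pj in Hp.
  lia.
Qed.

End Aux.

Section P.
Variables (R : realFieldType) (N : nat) (d T : R) (s : nat -> R).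
Local Notation sx := (sext N d T s).
Local Notation sl := (slope N d T s).
Local Notation M := (Mmax N d T s).
Local Notation nb := (next_bp N d T s).
Local Notation B := (bp N d T s).
Local Notation xb := (xbar N d T s).

Lemma sl_le a j M0 : (a < j)%N -> (sl a j <= M0) = (sx j - sx a <= M0 * (j - a)%:R).
Proof. by move=> H; rewrite /slope ler_pdivrMr // ltr0n subn_gt0. Qed.
Lemma sl_lt a j M0 : (a < j)%N -> (sl a j < M0) = (sx j - sx a < M0 * (j - a)%:R).
Proof. by move=> H; rewrite /slope ltr_pdivrMr // ltr0n subn_gt0. Qed.
Lemma sl_eq a j M0 : (a < j)%N -> sl a j = M0 -> sx j - sx a = M0 * (j - a)%:R.
Proof.
move=> H <-; rewrite /slope divfK // pnatr_eq0 -lt0n subn_gt0 //.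
Qed.

Lemma Mmax_props a : (a < N.+1)%N ->
  (forall j, (a < j <= N.+1)%N -> sl a j <= M a) /\
  exists j, (a < j <= N.+1)%N /\ sl a j = M a.
Proof.
move=> Ha.
have E : N.+2 = (a.+1 + (N.+1 - a))%N by lia.
have [_ [H2 H3]] := gmax (sl a) (sl a a.+1) a.+1 N.+2.
rewrite /Mmax; split.
  move=> j Hj; apply: H2; lia.
case: H3 => [H|[j [Hj Hj']]].
  by exists a.+1; rewrite H; split => //; lia.
by exists j; split => //; lia.
Qed.

Lemma nb_props a : (a < N.+1)%N ->
  (a < nb a <= N.+1)%N /\ sl a (nb a) = M a /\
  forall j, (nb a < j <= N.+1)%N -> sl a j < M a.
Proof.
move=> Ha.
have [Hle [j [Hj Hj']]] := Mmax_props Ha.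
have E : N.+2 = (a.+1 + (N.+1 - a))%N by lia.
have Hex : exists j, (a.+1 <= j < a.+1 + (N.+1 - a))%N /\ (fun j => sl a j == M a) j.
  by exists j; split; [lia | apply/eqP].
have [H1 [H2 H3]] := gmaxn Hex.
rewrite /next_bp Ha E.
split; first lia. split; first exact/eqP.
move=> k Hk; rewrite lt_neqAle Hle; last lia.
rewrite andbT; apply/negP => /eqP Hk'.
have := H3 k; rewrite Hk' eqxx => /(_ _ isT); lia.
Qed.

Lemma BS k : B k.+1 = nb (B k).
Proof. by rewrite /bp iterS. Qed.

Lemma B_le k : (B k <= N.+1)%N.
Proof.
elim: k => [|k IH]; first by [].
rewrite BS; have [H|H] := ltnP (B k) N.+1.
  by have [? _] := nb_props H; lia.
by rewrite /next_bp ltnNge H.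
Qed.

Lemma B_lt k : (B k < N.+1)%N -> (B k < B k.+1)%N.
Proof. by move=> H; rewrite BS; have [? _] := nb_props H; lia. Qed.

Lemma B_fix k : B k = N.+1 -> B k.+1 = N.+1.
Proof. by move=> H; rewrite BS H /next_bp ltnn. Qed.

Lemma B_step k : (B k <= B k.+1)%N.
Proof.
have [H|H] := ltnP (B k) N.+1; first by have := B_lt H; lia.
have E : B k = N.+1 by have := B_le k; lia.
by rewrite (B_fix E) E.
Qed.

Lemma B_mono k l : (k <= l)%N -> (B k <= B l)%N.
Proof.
move=> H; rewrite -(subnKC H); elim: (l - k)%N => [|n IH]; first by rewrite addn0.
by rewrite addnS; apply: leq_trans IH (B_step _).
Qed.

Lemma B_ge k : (minn k N.+1 <= B k)%N.
Proof.
elim: k => [|k IH]; first by [].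
have [H|H] := ltnP (B k) N.+1; first by have := B_lt H; lia.
have E : B k = N.+1 by have := B_le k; lia.
rewrite (B_fix E); lia.
Qed.

Lemma block k i : (B k < i <= B k.+1)%N -> block_start N d T s i = B k.
Proof.
move=> Hi.
have Hk : (k < N.+2)%N.
  have := B_ge k; have := B_le k.+1; lia.
apply/eqP; rewrite eqn_leq; apply/andP; split.
  apply/bigmax_leqP => k' Hk'.
  have [Hkk|Hkk] := leqP (nat_of_ord k') k; first exact: B_mono.
  have := B_mono Hkk; lia.
rewrite /block_start; apply: (@leq_bigmax_cond _ _ _ (Ordinal Hk)) => /=; lia.
Qed.

Lemma ex_block i : (1 <= i <= N.+1)%N -> exists k, (B k < i <= B k.+1)%N.
Proof.
move=> Hi.
suff : forall n, (i <= B n)%N -> exists k, (B k < i <= B k.+1)%N.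
  move=> /(_ N.+1) H; apply: H; have := B_ge N.+1; lia.
elim => [|n IH] H; first by rewrite /bp /= in H; lia.
have [H'|H'] := leqP i (B n); first exact: IH.
by exists n; rewrite H' H.
Qed.

Lemma xb_block k i : (B k < i <= B k.+1)%N -> xb i = M (B k) + d.
Proof. by move=> H; rewrite /xbar (block H). Qed.

Lemma M_decr k : (B k.+1 < N.+1)%N -> M (B k.+1) < M (B k).
Proof.
move=> Hb.
have Ha : (B k < N.+1)%N.
  have [//|H] := ltnP (B k) N.+1.
  have E : B k = N.+1 by have := B_le k; lia.
  by rewrite (B_fix E) ltnn in Hb.
have [Hab [Hsab Hlt]] := nb_props Ha.
rewrite -BS in Hab Hsab Hlt.
have [_ [j [Hj Hsj]]] := Mmax_props Hb.
have e1 := sl_eq (ltac:(lia) : (B k.+1 < j)%N) Hsj.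
have e2 := sl_eq (ltac:(lia) : (B k < B k.+1)%N) Hsab.
have e3 := Hlt j Hj; rewrite sl_lt in e3; last lia.
move: e1 e2 e3; rewrite !natrB; try lia.
move=> e1 e2 e3.
have Hp : 0 < (j%:R - (B k.+1)%:R : R) by rewrite -natrB ?ltr0n ?subn_gt0; lia.
rewrite -(ltr_pM2r Hp).
lra.
Qed.

Lemma sum_B m : \sum_(1 <= i < (B m).+1) xb i = sx (B m) + (B m)%:R * d.
Proof.
elim: m => [|m IH].
  by rewrite /bp /= big_geq // /sext /= mul0r addr0.
have [H|H] := ltnP (B m) N.+1; last first.
  have E : B m = N.+1 by have := B_le m; lia.
  by rewrite (B_fix E) -E.
have Hs := B_lt H.
rewrite (@big_cat_nat _ _ _ (B m).+1); [|lia|lia].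
rewrite IH (eq_big_nat _ _ (F2 := fun=> M (B m) + d)); last first.
  by move=> i Hi; apply: xb_block; lia.
rewrite sumr_const_nat.
have [_ [Hsab _]] := nb_props H.
rewrite -BS in Hsab.
have e := sl_eq Hs Hsab.
move: e; rewrite subSS -[(M (B m) + d) *+ _]mulr_natr /= !natrB; try by rewrite -?BS; lia.
move=> e; lra.
Qed.

End P.

Theorem lemma4 (R : realFieldType) (N : nat) (d T : R) (s : nat -> R) :
  (1 <= N)%N -> 0 < d -> N.+1%:R * d <= T ->
  0 <= s 1%N ->
  (forall i : nat, (1 <= i)%N -> (i < N)%N -> s i <= s i.+1) ->
  (forall i : nat, (1 <= i)%N -> (i < N)%N ->
     xbar N d T s i.+1 <= xbar N d T s i) /\
  (forall j : nat, (1 <= j)%N -> (j <= N)%N ->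
     xbar N d T s j.+1 < xbar N d T s j ->
     \sum_(1 <= i < j.+1) xbar N d T s i = s j + j%:R * d).
Proof.
move=> HN Hd HT Hs1 Hmono; split.
- move=> i Hi1 HiN.
  have [k Hk] := @ex_block R N d T s i (ltac:(lia) : (1 <= i <= N.+1)%N).
  have [Hlt|Hge] := ltnP i (bp N d T s k.+1).
    rewrite (xb_block (k := k)); last lia.
    by rewrite (xb_block (k := k)); last lia.
  have E : bp N d T s k.+1 = i by lia.
  have Hb : (bp N d T s k.+1 < N.+1)%N by lia.
  have := B_lt Hb => Hb2.
  rewrite (xb_block (k := k.+1)); last lia.
  rewrite (xb_block (k := k)); last lia.
  by rewrite lerD2r; apply: ltW; apply: M_decr.
- move=> j Hj1 HjN Hlt.
  have [k Hk] := @ex_block R N d T s j (ltac:(lia) : (1 <= j <= N.+1)%N).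
  have [Hl|Hge] := ltnP j (bp N d T s k.+1).
    move: Hlt; rewrite (xb_block (k := k)); last lia.
    by rewrite (xb_block (k := k)) ?ltxx //; lia.
  have E : bp N d T s k.+1 = j by lia.
  rewrite -E sum_B E /sext.
  have -> : (j == 0%N) = false by apply/eqP; lia.
  by have -> : (j == N.+1) = false by apply/eqP; lia.
Qed.
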